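(* For every unital Abelian po-group $(A,u)$, the functor $(A,u)\otimes-\colon\mathbf{POG}_u\to\mathbf{POG}_u$ preserves colimits over every small connected category $\mathcal{D}$.
   Context: $\mathbf{POG}_u$ is the category of Abelian po-groups with order unit (an element $u\ge0$ such that every $x$ satisfies $x\le nu$ for some $n\in\mathbb{N}$) and order-preserving, unit-preserving group homomorphisms. The tensor product $(A,u)\otimes(B,v)=(A\otimes B,u\otimes v)$ is the Abelian group tensor product with positive cone generated by the elementary tensors $a\otimes b$, $a\in A^+$, $b\in B^+$ (it is universal for bihomomorphisms: maps additive in each variable, positive on positives, unit to unit). A category is connected if it is nonempty and any two objects are joined by a zigzag of morphisms. A functor $\Phi$ preserves colimits over $\mathcal{D}$ if it sends every colimiting cocone of a $\mathcal{D}$-shaped diagram to a colimiting cocone. *)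

(* Defs.v *)
From HB Require Import structures.
From mathcomp Require Import all_boot all_order all_algebra.
From Stdlib Require Import Relations.
Set Implicit Arguments. Unset Strict Implicit. Unset Printing Implicit Defensive.
Import GRing.Theory.
Local Open Scope ring_scope.

(* A partial order on an Abelian group is given by its positive cone P:
   x <= y  iff  y - x \in P.  P is a submonoid with P /\ -P = {0}. *)
Record pog := Pog {
  car :> zmodType;
  pos : car -> Prop;
  unit : car;
  pos0 : pos 0;
  posD : forall x y, pos x -> pos y -> pos (x + y);
  pos_antisym : forall x, pos x -> pos (- x) -> x = 0;
  pos_unit : pos unit;
  (* order unit: every x satisfies x <= n u for some n *)
  unit_order : forall x : car, exists n : nat, pos (unit *+ n - x)
}.

Record pmor (A B : pog) := PMor {
  pm :> car A -> car B;
  pm_add : forall x y, pm (x + y) = pm x + pm y;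
  pm_pos : forall x, pos x -> pos (pm x);
  pm_unit : pm (unit A) = unit B
}.

Record category := MkCategory {
  Obj : Type;
  Hom : Obj -> Obj -> Type;
  idc : forall i, Hom i i;
  comp : forall i j k, Hom j k -> Hom i j -> Hom i k;
  comp_idl : forall i j (f : Hom i j), comp (idc j) f = f;
  comp_idr : forall i j (f : Hom i j), comp f (idc i) = f;
  comp_assoc : forall i j k l (f : Hom i j) (g : Hom j k) (h : Hom k l),
      comp h (comp g f) = comp (comp h g) f
}.
Arguments Hom : clear implicits.
Arguments idc : clear implicits.
Arguments comp c {i j k}.

Definition connected (D : category) : Prop :=
  inhabited (Obj D) /\
  forall i j : Obj D,
    clos_refl_sym_trans (Obj D) (fun a b => inhabited (Hom D a b)) i j.

Definition is_diagram (D : category) (Fo : Obj D -> pog)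
  (Fm : forall i j, Hom D i j -> pmor (Fo i) (Fo j)) : Prop :=
  (forall i x, Fm i i (idc D i) x = x) /\
  (forall i j k (f : Hom D i j) (g : Hom D j k) x,
      Fm i k (comp D g f) x = Fm j k g (Fm i j f x)).

Definition is_cocone (D : category) (Fo : Obj D -> pog)
  (Fm : forall i j, Hom D i j -> pmor (Fo i) (Fo j))
  (C : pog) (c : forall i, pmor (Fo i) C) : Prop :=
  forall i j (d : Hom D i j) x, c j (Fm i j d x) = c i x.

Definition is_colimit (D : category) (Fo : Obj D -> pog)
  (Fm : forall i j, Hom D i j -> pmor (Fo i) (Fo j))
  (C : pog) (c : forall i, pmor (Fo i) C) : Prop :=
  is_cocone Fm c /\
  forall (C' : pog) (c' : forall i, pmor (Fo i) C'),
    is_cocone Fm c' ->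
    exists h : pmor C C',
      (forall i x, h (c i x) = c' i x) /\
      (forall h' : pmor C C', (forall i x, h' (c i x) = c' i x) ->
         forall y, h' y = h y).

Definition biadditive (A B : zmodType) (G : zmodType) (beta : A -> B -> G) :=
  (forall a a' b, beta (a + a') b = beta a b + beta a' b) /\
  (forall a b b', beta a (b + b') = beta a b + beta a b').

(* A realization of the functor (A,u) (x) - : for each object B, an object
   T B together with a map tau_B : A x B -> T B which is the Abelian-group
   tensor product (universal among biadditive maps into Abelian groups),
   whose positive cone is the submonoid generated by the elementary tensors
   a (x) b (a, b >= 0), and whose unit is u (x) v; on morphisms, T f is
   id_A (x) f, i.e. T f (a (x) b) = a (x) f b. *)
Record tensor_functor (A : pog) := TensorFunctor {
  T : pog -> pog;
  tau : forall B : pog, car A -> car B -> car (T B);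
  tau_biadd : forall B : pog, biadditive (@tau B);
  tau_univ : forall (B : pog) (G : zmodType) (beta : car A -> car B -> G),
      biadditive beta ->
      exists phi : car (T B) -> G,
        (forall x y, phi (x + y) = phi x + phi y) /\
        (forall a b, phi (tau a b) = beta a b) /\
        (forall psi : car (T B) -> G,
            (forall x y, psi (x + y) = psi x + psi y) ->
            (forall a b, psi (tau a b) = beta a b) ->
            forall z, psi z = phi z);
  tau_pos : forall (B : pog) (z : car (T B)),
      pos z <->
      exists s : seq (car A * car B),
        (forall p, p \in s -> pos p.1 /\ pos p.2) /\
        z = \sum_(p <- s) tau p.1 p.2;
  tau_unit : forall B : pog, unit (T B) = tau (unit A) (unit B);
  Tm : forall B B' : pog, pmor B B' -> pmor (T B) (T B');
  Tm_tau : forall (B B' : pog) (f : pmor B B') a b,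
      Tm f (tau a b) = tau a (f b)
}.

Definition preserves_colimits_over (A : pog) (Phi : tensor_functor A)
  (D : category) : Prop :=
  forall (Fo : Obj D -> pog) (Fm : forall i j, Hom D i j -> pmor (Fo i) (Fo j)),
    is_diagram Fm ->
    forall (C : pog) (c : forall i, pmor (Fo i) C),
      is_colimit Fm c ->
      is_colimit (Fo := fun i => T Phi (Fo i))
        (fun i j d => Tm Phi (Fm i j d)) (fun i => Tm Phi (c i)).

(* Main.v *)
Require Import Defs.
From HB Require Import structures.
From mathcomp Require Import all_boot all_order all_algebra.
From mathcomp Require Import boolp.
From Stdlib Require Import Relations.
Set Implicit Arguments. Unset Strict Implicit. Unset Printing Implicit Defensive.
Import GRing.Theory.
Local Open Scope ring_scope.

Definition addf (G H : zmodType) (f : G -> H) := forall x y, f (x + y) = f x + f y.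

Lemma addf0 (G H : zmodType) (f : G -> H) : addf f -> f 0 = 0.
Proof. by move=> h; apply: (addrI (f 0)); rewrite -h !addr0. Qed.

Lemma addfN (G H : zmodType) (f : G -> H) : addf f -> forall x, f (- x) = - f x.
Proof. by move=> h x; apply: (addrI (f x)); rewrite -h !subrr addf0. Qed.

Lemma addfB (G H : zmodType) (f : G -> H) : addf f -> forall x y, f (x - y) = f x - f y.
Proof. by move=> h x y; rewrite h addfN. Qed.

Lemma addfMn (G H : zmodType) (f : G -> H) : addf f -> forall x n, f (x *+ n) = f x *+ n.
Proof.
move=> h x; elim=> [|n IH]; first by rewrite !mulr0n addf0.
by rewrite !mulrS h IH.
Qed.

Lemma addf_sum (G H : zmodType) (f : G -> H) (I : Type) (s : seq I) (F : I -> G) :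
  addf f -> f (\sum_(p <- s) F p) = \sum_(p <- s) f (F p).
Proof.
move=> h; elim: s => [|p s IH]; first by rewrite !big_nil addf0.
by rewrite !big_cons h IH.
Qed.

Lemma pos_Mn (B : pog) (x : car B) n : pos x -> pos (x *+ n).
Proof.
move=> hx; elim: n => [|n IH]; first by rewrite mulr0n; apply: pos0.
by rewrite mulrS; apply: posD.
Qed.

Lemma pos_sum (B : pog) (I : eqType) (s : seq I) (F : I -> car B) :
  (forall p, p \in s -> pos (F p)) -> pos (\sum_(p <- s) F p).
Proof.
elim: s => [|p s IH] H; first by rewrite big_nil; apply: pos0.
rewrite big_cons; apply: posD; first by apply: H; rewrite inE eqxx.
by apply: IH => q hq; apply: H; rewrite inE hq orbT.
Qed.

Definition idealP (C : pog) (e : car C) (y : car C) : Prop :=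
  exists n : nat, pos (e *+ n - y) /\ pos (e *+ n + y).
Definition idl (C : pog) (e : car C) : {pred car C} := fun y => `[< idealP e y >].

Lemma idl_closed (C : pog) (e : car C) : zmod_closed (idl e).
Proof.
split.
  apply/asboolP; exists 0%N; rewrite mulr0n subr0 addr0; split; exact: pos0.
move=> u v /asboolP [n [h1 h2]] /asboolP [m [h3 h4]]; apply/asboolP.
exists (n + m)%N; rewrite mulrnDr; split.
  have -> : e *+ n + e *+ m - (u - v) = (e *+ n - u) + (e *+ m + v).
    by rewrite opprB [v - u]addrC addrACA.
  exact: posD.
have -> : e *+ n + e *+ m + (u - v) = (e *+ n + u) + (e *+ m - v).
  by rewrite addrACA.
exact: posD.
Qed.

HB.instance Definition _ (C : pog) (e : car C) :=
  GRing.isZmodClosed.Build (car C) (idl e) (idl_closed e).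
Record idT (C : pog) (e : car C) := IdT { idv :> car C; idP : idv \in idl e }.
HB.instance Definition _ (C : pog) (e : car C) := [isSub for @idv C e].
HB.instance Definition _ (C : pog) (e : car C) := [Choice of idT e by <:].
HB.instance Definition _ (C : pog) (e : car C) :=
  [SubChoice_isSubZmodule of idT e by <:].

Lemma idv_add (C : pog) (e : car C) : addf (@idv C e).
Proof. by move=> x y; rewrite Algebra.valD. Qed.

Lemma unit_in_idl (C : pog) (e : car C) : pos e -> e \in idl e.
Proof.
move=> he; apply/asboolP; exists 1%N; rewrite mulr1n subrr; split.
  exact: pos0.
exact: posD.
Qed.

Definition idpog (C : pog) (e : car C) (he : pos e) : pog.
Proof.
refine (@Pog (idT e) (fun y => pos (idv y)) (IdT (unit_in_idl he)) _ _ _ _ _).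
- by rewrite /= ?(addf0 (@idv_add C e)); exact: pos0.
- by move=> x y hx hy; rewrite /= ?idv_add; apply: posD.
- move=> x hx hnx; apply: val_inj => /=.
  by rewrite ?(addf0 (@idv_add C e)); apply: pos_antisym.
- exact: he.
- move=> x; case/asboolP: (idP x) => n [h1 h2]; exists n.
  by rewrite /= ?(addfB (@idv_add C e)) ?(addfMn (@idv_add C e)).
Defined.

Lemma in_ideal (B C : pog) (g : car B -> car C) :
  addf g -> (forall x, pos x -> pos (g x)) -> forall x, g x \in idl (g (unit B)).
Proof.
move=> ga gp x; apply/asboolP.
have [n hn] := unit_order x; have [m hm] := unit_order (- x).
exists (n + m)%N; split.
  have -> : g (unit B) *+ (n + m) - g x = g (unit B *+ n - x) + g (unit B *+ m).
    by rewrite (addfB ga) !(addfMn ga) mulrnDr addrAC.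
  by apply: posD; apply: gp => //; apply: pos_Mn; apply: pos_unit.
have -> : g (unit B) *+ (n + m) + g x = g (unit B *+ n) + g (unit B *+ m - - x).
  by rewrite (addfB ga) !(addfMn ga) mulrnDr ?opprK ?(addfN ga) ?opprK addrA.
by apply: posD; apply: gp => //; apply: pos_Mn; apply: pos_unit.
Qed.

Definition liftpm (B C : pog) (e : car C) (he : pos e) (g : car B -> car C)
  (hx : forall x, g x \in idl e) (ga : addf g)
  (gp : forall x, pos x -> pos (g x)) (hu : g (unit B) = e) : pmor B (idpog he).
Proof.
refine (@PMor B (idpog he) (fun x => IdT (hx x)) _ _ _).
- by move=> x y; apply: val_inj => /=; rewrite ?idv_add /= ga.
- by move=> x hx'; apply: gp.
- by apply: val_inj => /=.
Defined.

Lemma liftpmE (B C : pog) (e : car C) (he : pos e) (g : car B -> car C)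
  (hx : forall x, g x \in idl e) (ga : addf g)
  (gp : forall x, pos x -> pos (g x)) (hu : g (unit B) = e) x :
  idv (liftpm he hx ga gp hu x) = g x.
Proof. by []. Qed.

Definition pcomp (A B C : pog) (g : pmor B C) (f : pmor A B) : pmor A C.
Proof.
refine (@PMor A C (fun x => g (f x)) _ _ _).
- by move=> x y; rewrite !pm_add.
- by move=> x hx; apply: pm_pos; apply: pm_pos.
- by rewrite !pm_unit.
Defined.

Lemma ideal_uniq (D : category) (Fo : Obj D -> pog)
  (Fm : forall i j, Defs.Hom D i j -> pmor (Fo i) (Fo j))
  (C : pog) (c : forall i, pmor (Fo i) C) (Hcol : is_colimit Fm c)
  (C' : pog) (g g' : car C -> car C') :
  addf g -> addf g' -> (forall x, pos x -> pos (g x)) ->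
  (forall x, pos x -> pos (g' x)) -> g (unit C) = g' (unit C) ->
  (forall i x, g (c i x) = g' (c i x)) -> forall y, g y = g' y.
Proof.
move=> ga ga' gp gp' gu gc y.
have he : pos (g (unit C)) by apply: gp; apply: pos_unit.
set k := liftpm he (in_ideal ga gp) ga gp (erefl _) : pmor C (idpog he).
have hx' : forall x, g' x \in idl (g (unit C)) by rewrite gu; apply: in_ideal.
set k' := liftpm he hx' ga' gp' (esym gu) : pmor C (idpog he).
have Hcoc : is_cocone Fm (fun i => pcomp k (c i)).
  by move=> i j d x /=; apply: val_inj => /=; rewrite (Hcol.1 i j d x).
have [h [_ hU]] := Hcol.2 _ _ Hcoc.
have E1 := hU k (fun i x => erefl) y.
have E2 : k' y = h y.
  by apply: hU => i x /=; apply: val_inj => /=; rewrite gc.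
have := congr1 (@idv _ _) (etrans E1 (esym E2)).
by rewrite !liftpmE.
Qed.

Lemma ideal_ext (D : category) (Fo : Obj D -> pog)
  (Fm : forall i j, Defs.Hom D i j -> pmor (Fo i) (Fo j))
  (C : pog) (c : forall i, pmor (Fo i) C) (Hcol : is_colimit Fm c)
  (C' : pog) (gi : forall i, car (Fo i) -> car C') (e : car C') (he : pos e) :
  (forall i, addf (gi i)) -> (forall i x, pos x -> pos (gi i x)) ->
  (forall i j d x, gi j (Fm i j d x) = gi i x) ->
  (forall i, gi i (unit (Fo i)) = e) ->
  exists g : car C -> car C', addf g /\ (forall x, pos x -> pos (g x)) /\
    forall i x, g (c i x) = gi i x.
Proof.
move=> ga gp gc gu.
have hx : forall i x, gi i x \in idl e.
  by move=> i x; rewrite -(gu i); exact: (in_ideal (ga i) (gp i)).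
pose k i := liftpm he (hx i) (ga i) (gp i) (gu i).
have Hcoc : is_cocone Fm k.
  by move=> i j d x; apply: val_inj => /=; apply: gc.
have [h [hc _]] := Hcol.2 _ _ Hcoc.
exists (fun y => idv (h y)); split; last split.
- by move=> x y; rewrite pm_add idv_add.
- by move=> x hx'; apply: (pm_pos h).
- by move=> i x; rewrite hc.
Qed.

Lemma T_ext (A : pog) (Phi : tensor_functor A) (B : pog) (G : zmodType)
  (psi psi' : car (T Phi B) -> G) :
  addf psi -> addf psi' -> (forall a b, psi (tau Phi a b) = psi' (tau Phi a b)) ->
  forall z, psi z = psi' z.
Proof.
move=> pa pa' H z.
have bi : biadditive (fun a b => psi (tau Phi a b)).
  have [t1 t2] := tau_biadd Phi B.
  by split=> *; rewrite ?t1 ?t2 pa.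
have [phi [_ [_ U]]] := @tau_univ A Phi B G _ bi.
rewrite (U psi) // (U psi') //.
Qed.

Lemma Tm_comp (A : pog) (Phi : tensor_functor A) (B B' B'' : pog)
  (f : pmor B B') (f' : pmor B' B'') (g : pmor B B'') :
  (forall x, f' (f x) = g x) -> forall z, Tm Phi f' (Tm Phi f z) = Tm Phi g z.
Proof.
move=> H; apply: T_ext.
- by move=> x y; rewrite !pm_add.
- by move=> x y; rewrite !pm_add.
- by move=> a b; rewrite !Tm_tau H.
Qed.

Lemma conn_const (D : category) (Fo : Obj D -> pog)
  (Fm : forall i j, Defs.Hom D i j -> pmor (Fo i) (Fo j)) (G : Type)
  (gi : forall i, car (Fo i) -> G) :
  (forall i j d x, gi j (Fm i j d x) = gi i x) ->
  forall i j, clos_refl_sym_trans (Obj D) (fun a b => inhabited (Defs.Hom D a b)) i j ->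
  gi i (unit (Fo i)) = gi j (unit (Fo j)).
Proof.
move=> gc i j H; induction H as [x y [d]| x | x y _ IH | x y z _ IH1 _ IH2].
- by rewrite -(pm_unit (Fm x y d)) gc.
- by [].
- by rewrite IH.
- by rewrite IH1 IH2.
Qed.

Theorem corollary4p8 (A : pog) (Phi : tensor_functor A) (D : category) :
  connected D -> preserves_colimits_over Phi D.
Proof.
move=> [[i0] Hconn] Fo Fm Hdiag C c Hcol.
have Hcoc := Hcol.1.
split.
  by move=> i j d z /=; apply: Tm_comp => x; apply: Hcoc.
move=> C' c' Hc'.
set u := unit A.
have tauA1 : forall (B : pog) (b : car B), addf (fun a => tau Phi a b).
  by move=> B b a a'; rewrite (tau_biadd Phi B).1.
have tauA2 : forall (B : pog) (a : car A), addf (fun b : car B => tau Phi a b).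
  by move=> B a b b'; rewrite (tau_biadd Phi B).2.
have tau_pos1 : forall (B : pog) a (b : car B), pos a -> pos b -> pos (tau Phi a b).
  move=> B a b ha hb; apply: (proj2 (tau_pos _)); exists [:: (a, b)]; split.
    by move=> p; rewrite inE => /eqP -> /=.
  by rewrite big_seq1.
have gi_add : forall a i, addf (fun x => c' i (tau Phi a x)).
  by move=> a i x y; rewrite (tauA2 _ a) pm_add.
have gi_pos : forall a i x, pos a -> pos x -> pos (c' i (tau Phi a x)).
  by move=> a i x ha hx; apply: pm_pos; apply: tau_pos1.
have gi_comp : forall a i j d x, c' j (tau Phi a (Fm i j d x)) = c' i (tau Phi a x).
  by move=> a i j d x; rewrite -Tm_tau; apply: Hc'.
have uC : unit C = c i0 (unit (Fo i0)) by rewrite pm_unit.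
have Gex : forall a, exists g : car C -> car C', pos a ->
    addf g /\ (forall y, pos y -> pos (g y)) /\
    forall i x, g (c i x) = c' i (tau Phi a x).
  move=> a; case: (pselect (pos a)) => ha; last by exists (fun _ => 0).
  have he : pos (c' i0 (tau Phi a (unit (Fo i0)))).
    by apply: gi_pos => //; apply: pos_unit.
  have [g Hg] := ideal_ext Hcol he (gi_add a) (fun i x => gi_pos a i x ha)
    (gi_comp a) (fun i => conn_const (gi_comp a) (Hconn i i0)).
  by exists g.
pose G a := proj1_sig (cid (Gex a)).
have HG : forall a, pos a -> addf (G a) /\ (forall y, pos y -> pos (G a y)) /\
    forall i x, G a (c i x) = c' i (tau Phi a x).
  by move=> a; exact: (proj2_sig (cid (Gex a))).
have GD : forall a a', pos a -> pos a' -> forall y, G (a + a') y = G a y + G a' y.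
  move=> a a' ha ha'.
  have haa : pos (a + a') by apply: posD.
  have [ga [gp gc]] := HG _ ha; have [ga' [gp' gc']] := HG _ ha'.
  have [gs [gps gcs]] := HG _ haa.
  apply: (ideal_uniq Hcol) => //.
  - by move=> x y; rewrite ga ga' addrACA.
  - by move=> x hx; apply: posD; [apply: gp | apply: gp'].
  - by rewrite uC gc gc' gcs (tauA1 _ (unit (Fo i0))) pm_add.
  - by move=> i x; rewrite gc gc' gcs (tauA1 _ x) pm_add.
have G0 : forall y, G 0 y = 0.
  move=> y; have := GD 0 0 (pos0 A) (pos0 A) y; rewrite addr0 => H.
  by apply: (addrI (G 0 y)); rewrite addr0 -H.
have shift : forall a1 a2 b1 b2, pos a1 -> pos a2 -> pos b1 -> pos b2 ->
    a1 - a2 = b1 - b2 -> forall y, G a1 y - G a2 y = G b1 y - G b2 y.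
  move=> a1 a2 b1 b2 h1 h2 h3 h4 Heq y.
  have E : a1 + b2 = b1 + a2.
    by have := congr1 (fun t => t + a2 + b2) Heq; rewrite /= subrK addrAC subrK.
  have := GD a1 b2 h1 h4 y; rewrite E GD // => H.
  apply/eqP; rewrite subr_eq addrAC eq_sym subr_eq; apply/eqP.
  by rewrite H.
have Dex : forall a, exists p : car A * car A, pos p.1 /\ pos p.2 /\ a = p.1 - p.2.
  move=> a; have [n hn] := unit_order a.
  exists (u *+ n, u *+ n - a); split => /=; last split => //.
    by apply: pos_Mn; apply: pos_unit.
  by rewrite opprB addrC subrK.
pose dec a := proj1_sig (cid (Dex a)).
have Hdec : forall a, pos (dec a).1 /\ pos (dec a).2 /\ a = (dec a).1 - (dec a).2.
  by move=> a; exact: (proj2_sig (cid (Dex a))).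
pose beta a y := G (dec a).1 y - G (dec a).2 y.
have betaE : forall a1 a2, pos a1 -> pos a2 -> forall y, beta (a1 - a2) y = G a1 y - G a2 y.
  move=> a1 a2 h1 h2 y; have [d1 [d2 de]] := Hdec (a1 - a2).
  by rewrite /beta; apply: shift.
have betaP : forall a, pos a -> forall y, beta a y = G a y.
  by move=> a ha y; have := betaE a 0 ha (pos0 A) y; rewrite !subr0 G0 subr0.
have bi : biadditive beta.
  split.
    move=> a a' y.
    have [d1 [d2 de]] := Hdec a; have [d1' [d2' de']] := Hdec a'.
    have -> : a + a' = ((dec a).1 + (dec a').1) - ((dec a).2 + (dec a').2).
      by rewrite {1}de {1}de' opprD addrACA.
    rewrite betaE; try by apply: posD.
    by rewrite /beta !GD // opprD addrACA.
  move=> a y y'; rewrite /beta.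
  have [d1 [d2 _]] := Hdec a.
  by rewrite (HG _ d1).1 (HG _ d2).1 opprD addrACA.
have [phi [phiA [phiT phiU]]] := @tau_univ A Phi C C' beta bi.
have phiP : forall z, pos z -> pos (phi z).
  move=> z /(proj1 (tau_pos _)) [s [Hs ->]].
  rewrite (addf_sum _ _ phiA); apply: pos_sum => p /Hs [h1 h2].
  by rewrite phiT betaP //; apply: (HG _ h1).2.1.
have phiu : phi (unit (T Phi C)) = unit C'.
  rewrite tau_unit phiT betaP; last exact: pos_unit.
  by rewrite uC (HG _ (pos_unit A)).2.2 -tau_unit pm_unit.
have key : forall a, a = (dec a).1 - (dec a).2 by move=> a; case: (Hdec a) => _ [].
exists (PMor phiA phiP phiu); split.
  move=> i x /=; apply: (@T_ext A Phi (Fo i) C' (fun z => phi (Tm Phi (c i) z)) (c' i)).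
  - by move=> y y'; rewrite !pm_add phiA.
  - by move=> y y'; rewrite pm_add.
  - move=> a b; rewrite Tm_tau phiT /beta.
    have [d1 [d2 _]] := Hdec a.
    rewrite (HG _ d1).2.2 (HG _ d2).2.2.
    rewrite -(addfB (pm_add (c' i))) -(addfB (tauA1 _ b)).
    by rewrite -key.
move=> h' Hh' z; apply: (@T_ext A Phi C C' h' phi) => //; first by move=> y y'; rewrite pm_add.
move=> a y /=; rewrite phiT.
have keyG : forall a, pos a -> forall y, h' (tau Phi a y) = G a y.
  move=> a0 ha0; have [ga [gp gc]] := HG _ ha0.
  apply: (ideal_uniq Hcol) => //.
  - by move=> y1 y2; rewrite (tauA2 _ a0) pm_add.
  - by move=> y1 hy1; apply: pm_pos; apply: tau_pos1.
  - by rewrite uC -Tm_tau Hh' gc.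
  - by move=> i x; rewrite -Tm_tau Hh' gc.
have [d1 [d2 _]] := Hdec a.
rewrite /beta {1}(key a) (addfB (tauA1 _ y)) (addfB (pm_add h')).
by rewrite !keyG.
Qed.
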